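(* For every positive integer $n$, $$\sum_{j=1}^{n}\csc^6\left(\frac{\pi(2j-1)}{4n}\right) = \frac{8n^2(8n^4+5n^2+2)}{15}.$$ *)

(* Defs.v *)
From Stdlib Require Export Reals.
Open Scope R_scope.

Definition csc (x : R) : R := 1 / sin x.

(* Main.v *)
Require Import Defs.
From Stdlib Require Import Reals Lra Lia.
From Coquelicot Require Import Coquelicot.
Open Scope R_scope.

Fixpoint sumR (f : nat -> R) (n : nat) : R :=
  match n with O => 0 | S k => sumR f k + f k end.

Lemma sumR_ext f g n : (forall j, (j < n)%nat -> f j = g j) -> sumR f n = sumR g n.
Proof. induction n; simpl; intros H; [reflexivity|]. rewrite IHn by (intros; apply H; lia). rewrite H by lia. reflexivity. Qed.

Lemma sumR_plus f g n : sumR (fun j => f j + g j) n = sumR f n + sumR g n.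
Proof. induction n; simpl; [lra|]. rewrite IHn; lra. Qed.

Lemma sumR_scal c f n : sumR (fun j => c * f j) n = c * sumR f n.
Proof. induction n; simpl; [lra|]. rewrite IHn; lra. Qed.

Lemma sumR_const c n : sumR (fun _ => c) n = INR n * c.
Proof. induction n; simpl sumR; [simpl; lra|]. rewrite IHn, S_INR; lra. Qed.

Lemma sumR_zero f n : (forall j, (j < n)%nat -> f j = 0) -> sumR f n = 0.
Proof. intros H. rewrite (sumR_ext f (fun _ => 0)) by auto. rewrite sumR_const; lra. Qed.

Lemma sumR_swap (f : nat -> nat -> R) J K :
  sumR (fun j => sumR (fun k => f j k) K) J = sumR (fun k => sumR (fun j => f j k) J) K.
Proof. induction J; simpl. { symmetry; apply sumR_zero; auto. }
  rewrite IHJ, <- sumR_plus. reflexivity. Qed.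

Lemma sumR_tele b n : sumR (fun k => b k - b (S k)) n = b O - b n.
Proof. induction n; simpl; [lra|]. rewrite IHn; lra. Qed.

Lemma sumR_shift f n : sumR f (S n) = f O + sumR (fun j => f (S j)) n.
Proof. induction n; simpl; [lra|]. simpl in IHn. lra. Qed.

Lemma sumR_split f a b : sumR f (a + b) = sumR f a + sumR (fun j => f (a + j)%nat) b.
Proof. induction b; simpl. rewrite Nat.add_0_r; lra. rewrite Nat.add_succ_r; simpl. rewrite IHb; lra. Qed.

Lemma sumR_rev f n : sumR (fun j => f (n - 1 - j)%nat) n = sumR f n.
Proof. revert f; induction n; intros f; [reflexivity|].
  rewrite sumR_shift. simpl sumR.
  rewrite (sumR_ext _ (fun j => f (n - 1 - j)%nat)) by (intros; f_equal; lia).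
  rewrite IHn. replace (S n - 1 - 0)%nat with n by lia. lra. Qed.

Lemma sin_kPI A j : sin (A + INR j * PI) = (-1) ^ j * sin A.
Proof. induction j. simpl; rewrite Rmult_0_l, Rplus_0_r; lra.
  rewrite S_INR. replace (A + (INR j + 1) * PI) with ((A + INR j * PI) + PI) by ring.
  rewrite neg_sin, IHj; simpl; ring. Qed.

Lemma cos_kPI A j : cos (A + INR j * PI) = (-1) ^ j * cos A.
Proof. induction j. simpl; rewrite Rmult_0_l, Rplus_0_r; lra.
  rewrite S_INR. replace (A + (INR j + 1) * PI) with ((A + INR j * PI) + PI) by ring.
  rewrite neg_cos, IHj; simpl; ring. Qed.

Lemma orth A r m : (1 <= r < m)%nat ->
  sumR (fun j => cos (A - INR j * (2 * INR r * PI / INR m))) m = 0.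
Proof. intros Hr.
  assert (HM : 0 < INR m) by (apply lt_0_INR; lia).
  assert (Hr0 : 0 < INR r) by (apply lt_0_INR; lia).
  assert (Hrm : INR r < INR m) by (apply lt_INR; lia).
  set (be := 2 * INR r * PI / INR m).
  assert (Hs : sin (be / 2) <> 0).
  { apply Rgt_not_eq, sin_gt_0; unfold be.
    - apply Rmult_lt_0_compat; [|lra]. apply Rdiv_lt_0_compat; [|lra]. pose proof PI_RGT_0; nra.
    - replace (2 * INR r * PI / INR m / 2) with (PI * (INR r / INR m)) by (field; lra).
      pose proof PI_RGT_0. assert (INR r / INR m < 1) by (apply (Rmult_lt_reg_r (INR m)); [lra|]; unfold Rdiv; rewrite Rmult_assoc, Rinv_l; lra). nra. }
  set (c := fun j => sin (A - INR j * be + be / 2)).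
  assert (Ht : forall j, 2 * sin (be/2) * cos (A - INR j * be) = c j - c (S j)).
  { intros j; unfold c. rewrite S_INR.
    replace (A - (INR j + 1) * be + be / 2) with ((A - INR j * be) - be/2) by field.
    rewrite sin_minus, sin_plus. ring. }
  apply (Rmult_eq_reg_l (2 * sin (be/2))); [|lra].
  rewrite <- sumR_scal, Rmult_0_r.
  rewrite (sumR_ext _ (fun j => c j - c (S j))) by (intros; apply Ht).
  rewrite sumR_tele. unfold c. simpl INR at 1.
  replace (A - INR m * be + be / 2) with ((A - 0 * be + be/2) + - (2 * INR r * PI)) by (unfold be; field; lra).
  set (z := A - 0 * be + be / 2).
  replace z with ((z + - (2 * INR r * PI)) + 2 * INR r * PI) at 1 by ring.
  rewrite sin_period. ring. Qed.

Lemma tele_cos th N : sin th * sumR (fun k => cos ((INR N - 1 - 2 * INR k) * th)) N = sin (INR N * th).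
Proof.
  set (b := fun k => sin ((INR N - 2 * INR k) * th)).
  apply (Rmult_eq_reg_l 2); [|lra].
  rewrite <- Rmult_assoc, <- sumR_scal.
  rewrite (sumR_ext _ (fun k => b k - b (S k))).
  2:{ intros k _. unfold b. rewrite S_INR.
      replace ((INR N - 2 * INR k) * th) with ((INR N - 1 - 2 * INR k) * th + th) by ring.
      replace ((INR N - 2 * (INR k + 1)) * th) with ((INR N - 1 - 2 * INR k) * th - th) by ring.
      rewrite sin_plus, sin_minus. ring. }
  rewrite sumR_tele. unfold b. simpl INR.
  replace ((INR N - 2 * INR N) * th) with (- (INR N * th)) by ring.
  rewrite sin_neg. ring_simplify. replace (INR N - 2*0) with (INR N) by ring. ring. Qed.

Lemma cot_single th m : (1 <= m)%nat -> sin th <> 0 ->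
  cos th / sin th * sin (INR m * th) =
  cos (INR m * th) + sumR (fun k => cos ((INR m - 2 - 2 * INR k) * th)) (m - 1).
Proof. intros Hm Hs.
  pose proof (tele_cos th (m - 1)) as T.
  rewrite minus_INR in T by lia. simpl INR in T.
  rewrite (sumR_ext _ (fun k => cos ((INR m - 1 - 1 - 2 * INR k) * th))).
  2:{ intros; f_equal; f_equal; ring. }
  replace ((INR m - 1) * th) with (INR m * th - th) in T by ring.
  rewrite sin_minus in T.
  apply (Rmult_eq_reg_l (sin th)); [|auto].
  rewrite Rmult_plus_distr_l, T. field. auto. Qed.

Lemma cot_sum m x : (1 <= m)%nat -> 0 < x < PI / INR m ->
  sumR (fun j => cos (x + INR j * PI / INR m) / sin (x + INR j * PI / INR m)) m
  = INR m * (cos (INR m * x) / sin (INR m * x)).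
Proof. intros Hm Hx.
  set (M := INR m) in *.
  assert (HM : 0 < M) by (apply lt_0_INR; lia).
  assert (HMx : 0 < M * x < PI).
  { split. nra. replace PI with (M * (PI / M)) by (field; lra). apply Rmult_lt_compat_l. lra. lra. }
  assert (HsM : sin (M * x) <> 0) by (apply Rgt_not_eq, sin_gt_0; lra).
  apply (Rmult_eq_reg_r (sin (M * x))); [|auto].
  replace (M * (cos (M * x) / sin (M * x)) * sin (M * x)) with (M * cos (M * x)) by (field; auto).
  rewrite Rmult_comm, <- sumR_scal.
  rewrite (sumR_ext _ (fun j => cos (M * x) +
     sumR (fun k => cos ((M - 2 - 2 * INR k) * x - INR j * (2 * INR (S k) * PI / M))) (m - 1))).
  2:{ intros j Hj.
      set (th := x + INR j * PI / M).
      assert (Hth : 0 < th < PI).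
      { unfold th. assert (0 <= INR j) by apply pos_INR.
        assert (INR j + 1 <= M) by (rewrite <- S_INR; apply le_INR; lia).
        split. assert (0 <= INR j * PI / M) by (apply Rmult_le_pos; [pose proof PI_RGT_0; nra| left; apply Rinv_0_lt_compat; lra]). lra.
        assert (INR j * PI / M + PI / M <= PI).
        { replace (INR j * PI / M + PI / M) with ((INR j + 1) * (PI / M)) by (field; lra).
          replace PI with (M * (PI / M)) at 2 by (field; lra).
          apply Rmult_le_compat_r; [|lra]. left; apply Rdiv_lt_0_compat; [apply PI_RGT_0|lra]. }
        lra. }
      assert (Hs : sin th <> 0) by (apply Rgt_not_eq, sin_gt_0; lra).
      pose proof (cot_single th m Hm Hs) as C.
      assert (E : M * th = M * x + INR j * PI) by (unfold th; field; lra).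
      fold M in C. rewrite E, sin_kPI, cos_kPI in C.
      rewrite (sumR_ext _ (fun k => (-1)^j * cos ((M - 2 - 2 * INR k) * x - INR j * (2 * INR (S k) * PI / M)))) in C.
      2:{ intros k Hk. rewrite <- cos_kPI. f_equal. unfold th. rewrite S_INR. field. lra. }
      rewrite sumR_scal in C.
      assert (Hpm : (-1)^j <> 0) by (apply pow_nonzero; lra).
      apply (Rmult_eq_reg_l ((-1)^j)); [|auto]. rewrite Rmult_plus_distr_l, <- C. ring. }
  rewrite sumR_plus, sumR_const. fold M.
  rewrite sumR_swap, sumR_zero. ring.
  intros k Hk. apply orth. lia. Qed.

Lemma deriv_zero F l a b x : a < x < b -> (forall y, a < y < b -> F y = 0) -> is_derive F x l -> l = 0.
Proof. intros Hx HF Hd.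
  assert (H0 : is_derive F x 0).
  { apply (is_derive_ext_loc (fun _ => 0)).
    - apply (locally_interval _ x a b); simpl; try lra. intros y H1 H2. symmetry; apply HF; lra.
    - apply (is_derive_const 0). }
  pose proof (is_derive_unique _ _ _ Hd). pose proof (is_derive_unique _ _ _ H0). congruence. Qed.

Lemma is_derive_sumR (g g' : R -> R) (a : nat -> R) n x :
  (forall j, (j < n)%nat -> is_derive g (x + a j) (g' (x + a j))) ->
  is_derive (fun y => sumR (fun j => g (y + a j)) n) x (sumR (fun j => g' (x + a j)) n).
Proof. induction n; intros H; simpl.
  - apply (is_derive_const 0).
  - apply (is_derive_plus (fun y => sumR (fun j => g (y + a j)) n) (fun y => g (y + a n))).
    + apply IHn; intros; apply H; lia.
    + replace (g' (x + a n)) with (scal 1 (g' (x + a n))).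
      * apply (is_derive_comp g (fun y => y + a n) x (g' (x + a n)) 1).
        -- apply H; lia.
        -- auto_derive; auto; ring.
      * change (scal 1 (g' (x + a n)) = g' (x + a n)). apply (scal_one (g' (x + a n))).
Qed.

Lemma range_j m x j : (j < m)%nat -> 0 < x < PI / INR m -> 0 < x + INR j * PI / INR m < PI.
Proof. intros Hj Hx. set (M := INR m) in *.
  assert (HM : 0 < M) by (apply lt_0_INR; lia).
  assert (0 <= INR j) by apply pos_INR.
  assert (INR j + 1 <= M) by (rewrite <- S_INR; apply le_INR; lia).
  split. assert (0 <= INR j * PI / M) by (apply Rmult_le_pos; [pose proof PI_RGT_0; nra| left; apply Rinv_0_lt_compat; lra]). lra.
  assert (INR j * PI / M + PI / M <= PI).
  { replace (INR j * PI / M + PI / M) with ((INR j + 1) * (PI / M)) by (field; lra).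
    replace PI with (M * (PI / M)) at 2 by (field; lra).
    apply Rmult_le_compat_r; [|lra]. left; apply Rdiv_lt_0_compat; [apply PI_RGT_0|lra]. }
  lra. Qed.

Lemma range_M m x : (1 <= m)%nat -> 0 < x < PI / INR m -> 0 < INR m * x < PI.
Proof. intros Hm Hx. set (M := INR m) in *.
  assert (HM : 0 < M) by (apply lt_0_INR; lia).
  split. nra. replace PI with (M * (PI / M)) by (field; lra). apply Rmult_lt_compat_l; lra. Qed.

Lemma step m (g g' : R -> R) k : (1 <= m)%nat -> (forall y, 0 < y < PI -> is_derive g y (g' y)) ->
 (forall x, 0 < x < PI / INR m -> sumR (fun j => g (x + INR j * PI / INR m)) m = INR m ^ S k * g (INR m * x)) ->
 forall x, 0 < x < PI / INR m -> sumR (fun j => g' (x + INR j * PI / INR m)) m = INR m ^ S (S k) * g' (INR m * x).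
Proof. intros Hm Hd HS x Hx.
  set (F := fun y => sumR (fun j => g (y + INR j * PI / INR m)) m - INR m ^ S k * g (INR m * y)).
  assert (HF : is_derive F x (sumR (fun j => g' (x + INR j * PI / INR m)) m - INR m ^ S k * (INR m * g' (INR m * x)))).
  { apply (is_derive_minus (fun y => sumR (fun j => g (y + INR j * PI / INR m)) m) (fun y => INR m ^ S k * g (INR m * y))).
    - apply (is_derive_sumR g g' (fun j => INR j * PI / INR m)). intros j Hj. apply Hd. apply range_j; auto.
    - apply (is_derive_scal (fun y => g (INR m * y))).
      replace (INR m * g' (INR m * x)) with (scal (INR m) (g' (INR m * x))) by reflexivity.
      apply (is_derive_comp g (fun y => INR m * y)).
      + apply Hd. apply range_M; auto.
      + auto_derive; auto; ring. }
  assert (Z' : forall y, 0 < y < PI / INR m -> F y = 0) by (intros y Hy; unfold F; rewrite HS; auto; ring).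
  pose proof (deriv_zero F _ 0 (PI / INR m) x Hx Z' HF) as Z. simpl pow in *. lra. Qed.

Definition g0 y := cos y / sin y.
Definition g1 y := -1 / sin y ^ 2.
Definition g2 y := 2 * cos y / sin y ^ 3.
Definition g3 y := -6 / sin y ^ 4 + 4 / sin y ^ 2.
Definition g4 y := 24 * cos y / sin y ^ 5 - 8 * cos y / sin y ^ 3.
Definition g5 y := -120 / sin y ^ 6 + 120 / sin y ^ 4 - 16 / sin y ^ 2.

Ltac dtac := intros y Hy; assert (Hs : sin y <> 0) by (apply Rgt_not_eq, sin_gt_0; lra);
  assert (Hsc : cos y ^ 2 = 1 - sin y ^ 2) by (pose proof (sin2_cos2 y) as Hsc; unfold Rsqr in Hsc; simpl; lra);
  unfold g0, g1, g2, g3, g4, g5; auto_derive; repeat split; auto; try (repeat apply Rmult_integral_contrapositive_currified; auto; lra);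
  field_simplify_eq; auto; try (ring_simplify; rewrite ?Hsc; ring).

Lemma dg0 : forall y, 0 < y < PI -> is_derive g0 y (g1 y). Proof. dtac. Qed.
Lemma dg1 : forall y, 0 < y < PI -> is_derive g1 y (g2 y). Proof. dtac. Qed.
Lemma dg2 : forall y, 0 < y < PI -> is_derive g2 y (g3 y). Proof. dtac. Qed.
Lemma dg3 : forall y, 0 < y < PI -> is_derive g3 y (g4 y). Proof. dtac. Qed.
Lemma dg4 : forall y, 0 < y < PI -> is_derive g4 y (g5 y). Proof. dtac. Qed.

Lemma chain m : (1 <= m)%nat -> forall x, 0 < x < PI / INR m ->
  sumR (fun j => g1 (x + INR j * PI / INR m)) m = INR m ^ 2 * g1 (INR m * x) /\
  sumR (fun j => g3 (x + INR j * PI / INR m)) m = INR m ^ 4 * g3 (INR m * x) /\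
  sumR (fun j => g5 (x + INR j * PI / INR m)) m = INR m ^ 6 * g5 (INR m * x).
Proof. intros Hm.
  assert (S0 : forall x, 0 < x < PI / INR m -> sumR (fun j => g0 (x + INR j * PI / INR m)) m = INR m ^ 1 * g0 (INR m * x)).
  { intros x Hx. unfold g0. rewrite cot_sum; auto. ring. }
  pose proof (step m g0 g1 0 Hm dg0 S0) as S1.
  pose proof (step m g1 g2 1 Hm dg1 S1) as S2.
  pose proof (step m g2 g3 2 Hm dg2 S2) as S3.
  pose proof (step m g3 g4 3 Hm dg3 S3) as S4.
  pose proof (step m g4 g5 4 Hm dg4 S4) as S5.
  intros x Hx. split; [|split]; auto. Qed.

Lemma sum_f_R0_sumR f N : sum_f_R0 f N = sumR f (S N).
Proof. induction N; simpl; [lra|]. rewrite IHN. reflexivity. Qed.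

Theorem mainTheorem16 (n : nat) (hn : (1 <= n)%nat) :
  sum_f 1 n (fun j => (csc (PI * (2 * INR j - 1) / (4 * INR n))) ^ 6)
  = 8 * (INR n) ^ 2 * (8 * (INR n) ^ 4 + 5 * (INR n) ^ 2 + 2) / 15.
Proof.
  set (m := (2 * n)%nat).
  assert (Hm : (1 <= m)%nat) by (unfold m; lia).
  assert (HN : 0 < INR n) by (apply lt_0_INR; lia).
  assert (HMn : INR m = 2 * INR n) by (unfold m; rewrite mult_INR; reflexivity).
  set (M := INR m) in *.
  set (x0 := PI / M / 2).
  assert (Hx0 : 0 < x0 < PI / M).
  { unfold x0. pose proof PI_RGT_0. assert (0 < PI / M) by (apply Rdiv_lt_0_compat; lra). lra. }
  assert (HMx : M * x0 = PI / 2) by (unfold x0; field; lra).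
  destruct (chain m Hm x0 Hx0) as [E1 [E3 E5]].
  fold M in E1, E3, E5. rewrite HMx in E1, E3, E5.
  unfold g1, g3, g5 in E1, E3, E5. rewrite sin_PI2 in E1, E3, E5.
  set (t := fun j => x0 + INR j * PI / M) in *.
  assert (Ht : forall j, (j < m)%nat -> sin (t j) <> 0).
  { intros j Hj. apply Rgt_not_eq, sin_gt_0; apply range_j; auto. }
  set (A := sumR (fun j => 1 / sin (t j) ^ 2) m).
  set (B := sumR (fun j => 1 / sin (t j) ^ 4) m).
  set (Cs := sumR (fun j => 1 / sin (t j) ^ 6) m).
  assert (EA : A = M ^ 2).
  { rewrite (sumR_ext _ (fun j => -1 * (1 / sin (t j) ^ 2))) in E1  by (intros j Hj; pose proof (Ht j Hj); unfold t in *; field; auto).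
    rewrite sumR_scal in E1. fold A in E1. lra. }
  assert (EB : -6 * B + 4 * A = -2 * M ^ 4).
  { rewrite (sumR_ext _ (fun j => -6 * (1 / sin (t j) ^ 4) + 4 * (1 / sin (t j) ^ 2))) in E3 by (intros j Hj; pose proof (Ht j Hj); unfold t in *; field; auto).
    rewrite sumR_plus, !sumR_scal in E3. fold A B in E3. lra. }
  assert (EC : -120 * Cs + 120 * B - 16 * A = -16 * M ^ 6).
  { rewrite (sumR_ext _ (fun j => -120 * (1 / sin (t j) ^ 6) + 120 * (1 / sin (t j) ^ 4) + -16 * (1 / sin (t j) ^ 2))) in E5 by (intros j Hj; pose proof (Ht j Hj); unfold t in *; field; auto).
    rewrite !sumR_plus, !sumR_scal in E5. fold A B Cs in E5. lra. }
  assert (Hsym : Cs = 2 * sumR (fun j => 1 / sin (t j) ^ 6) n).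
  { unfold Cs, m. replace (2 * n)%nat with (n + n)%nat by lia. rewrite sumR_split.
    rewrite <- (sumR_rev (fun j => 1 / sin (t (n + j)%nat) ^ 6)).
    rewrite (sumR_ext (fun j => 1 / sin (t (n + (n - 1 - j))%nat) ^ 6) (fun j => 1 / sin (t j) ^ 6)). ring.
    intros j Hj. f_equal. f_equal.
    assert (EI : INR (n + (n - 1 - j)) = 2 * INR n - 1 - INR j).
    { assert (EE : (n + (n - 1 - j) + j + 1 = n + n)%nat) by lia.
      apply (f_equal INR) in EE. rewrite !plus_INR in EE. simpl in EE. rewrite plus_INR; lra. }
    unfold t. rewrite EI. rewrite <- sin_PI_x. f_equal. unfold x0. rewrite HMn. field. lra. }
  unfold sum_f. rewrite sum_f_R0_sumR. replace (S (n - 1)) with n by lia.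
  rewrite (sumR_ext _ (fun j => 1 / sin (t j) ^ 6)).
  2:{ intros j Hj. unfold csc.
      assert (Ea : PI * (2 * INR (j + 1) - 1) / (4 * INR n) = t j).
      { unfold t, x0. rewrite plus_INR, HMn. simpl. field. lra. }
      rewrite Ea. field. apply Ht. unfold m; lia. }
  rewrite HMn in EA, EB, EC.
  assert (Cs = 2 * (8 * INR n ^ 2 * (8 * INR n ^ 4 + 5 * INR n ^ 2 + 2) / 15)).
  { assert (Cs = (16 * (2 * INR n) ^ 6 + 120 * B - 16 * A) / 120) by lra.
    assert (B = (2 * (2 * INR n) ^ 4 + 4 * A) / 6) by lra.
    rewrite H, H0, EA. field. }
  lra.
Qed.
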